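(* The genus of a based matrix over a domain $R$ is a homology invariant: homologous based matrices over $R$ have equal genus.
   Context: $R$ is a commutative ring with unit and no zero-divisors. A based matrix over $R$ is a triple $(G,s,b)$, $G$ a finite set, $s\in G$, $b:G\times G\to R$ with $b(g,h)=-b(h,g)$, $b(g,g)=0$. For $X,Y\subset G$, $b(X,Y)=\sum_{g\in X,h\in Y}b(g,h)$. A filling of $T=(G,s,b)$ is a finite family $\{X_i\}$ of pairwise disjoint (possibly empty) subsets of $G$ with $\bigcup X_i=G$, $\#X_i\le2$ for all $i$, and one $X_i$ equal to $\{s\}$; its matrix is $(b(X_i,X_j))_{i,j}$, and $\sigma(\{X_i\})$ is half the rank (maximal size of a nonzero minor) of this matrix. The genus is $\sigma(T)=\min\sigma(\mathcal{X})$ over all fillings $\mathcal{X}$. Elementary extensions: $M_1$ adds a new element $g$ with $b(g,h)=0$ for all $h$; $M_2$ adds $g$ with $b(g,h)=b(s,h)$ for all $h$; $M_3$ adds $g_1,g_2$ with a skew-symmetric zero-diagonal extension such that $b(g_1,h)+b(g_2,h)=b(s,h)$ for all $h$. Isomorphism: bijection sending $s$ to $s'$ and $b$ to $b'$. Homologous: related by elementary extensions, their inverses and isomorphisms. *)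

(* Defs.v *)
From HB Require Import structures.
From mathcomp Require Import all_boot all_order all_algebra.
Unset Strict Implicit. Unset Printing Implicit Defensive.
Import Order.TTheory GRing.Theory Num.Theory.
Local Open Scope ring_scope.

Record bmat (R : idomainType) := BMat {
  bG : finType;
  bs : bG;
  bb : bG -> bG -> R;
  bb_skew : forall g h, bb g h = - bb h g;
  bb_diag : forall g, bb g g = 0 }.

Arguments bs {R} b.
Arguments bb {R} b _ _.
Arguments bG {R} b.

Section BasedMatrices.
Variable R : idomainType.

Definition bset (T : bmat R) (X Y : {set bG T}) : R :=
  \sum_(g in X) \sum_(h in Y) bb T g h.

Definition minor_rank (m : nat) (M : 'M[R]_m) : nat :=
  \max_(k < m.+1 | [exists f : {ffun 'I_k -> 'I_m}, exists g : {ffun 'I_k -> 'I_m},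
        [&& injectiveb f, injectiveb g &
            \det (\matrix_(i < k, j < k) M (f i) (g j)) != 0]]) k.

Definition is_filling (T : bmat R) (m : nat) (X : 'I_m -> {set bG T}) : Prop :=
  [/\ forall i j, i != j -> [disjoint X i & X j],
      \bigcup_(i < m) X i = [set: bG T],
      forall i, #|X i| <= 2
    & exists i, X i = [set bs T]]%N.

Definition filling_matrix (T : bmat R) (m : nat) (X : 'I_m -> {set bG T}) : 'M[R]_m :=
  \matrix_(i < m, j < m) bset T (X i) (X j).

Definition filling_sigma (T : bmat R) (m : nat) (X : 'I_m -> {set bG T}) : nat :=
  ((minor_rank m (filling_matrix T m X))./2)%N.

Definition is_genus (T : bmat R) (k : nat) : Prop :=
  (exists m (X : 'I_m -> {set bG T}), is_filling T m X /\ filling_sigma T m X = k) /\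
  (forall m (X : 'I_m -> {set bG T}), is_filling T m X -> (k <= filling_sigma T m X)%N).

Definition bmat_iso (T T' : bmat R) : Prop :=
  exists phi : bG T -> bG T', [/\ bijective phi, phi (bs T) = bs T' &
    forall x y, bb T' (phi x) (phi y) = bb T x y].

Definition bmat_emb (T T' : bmat R) (f : bG T -> bG T') : Prop :=
  [/\ injective f, f (bs T) = bs T' & forall x y, bb T' (f x) (f y) = bb T x y].

Definition ext_M1 (T T' : bmat R) : Prop :=
  exists (f : bG T -> bG T') (g : bG T'), [/\ bmat_emb T T' f,
    forall x, f x <> g,
    forall y, y = g \/ exists x, y = f x
  & forall x, bb T' g (f x) = 0].

Definition ext_M2 (T T' : bmat R) : Prop :=
  exists (f : bG T -> bG T') (g : bG T'), [/\ bmat_emb T T' f,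
    forall x, f x <> g,
    forall y, y = g \/ exists x, y = f x
  & forall x, bb T' g (f x) = bb T (bs T) x].

Definition ext_M3 (T T' : bmat R) : Prop :=
  exists (f : bG T -> bG T') (g1 g2 : bG T'), [/\ bmat_emb T T' f, g1 <> g2,
    forall x, f x <> g1 /\ f x <> g2,
    forall y, [\/ y = g1, y = g2 | exists x, y = f x]
  & forall x, bb T' g1 (f x) + bb T' g2 (f x) = bb T (bs T) x].

Definition elem_ext (T T' : bmat R) : Prop :=
  [\/ ext_M1 T T', ext_M2 T T' | ext_M3 T T'].

Inductive homologous : bmat R -> bmat R -> Prop :=
  | hom_refl T : homologous T T
  | hom_iso T T' : bmat_iso T T' -> homologous T T'
  | hom_ext T T' : elem_ext T T' -> homologous T T'
  | hom_ext_inv T T' : elem_ext T' T -> homologous T T'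
  | hom_sym T T' : homologous T T' -> homologous T' T
  | hom_trans T1 T2 T3 : homologous T1 T2 -> homologous T2 T3 -> homologous T1 T3.

End BasedMatrices.
Arguments bs {R} b.
Arguments bb {R} b _ _.
Arguments bG {R} b.
Arguments is_genus {R} T k.
Arguments homologous {R} _ _.

(* Main.v *)
Require Import Defs.
From mathcomp Require Import all_boot all_order all_algebra.
From mathcomp Require Import fraction.
Import Order.TTheory GRing.Theory Num.Theory.
Local Open Scope ring_scope.

Section Rank.
Variable R : idomainType.
Local Notation tf := (@tofrac R).

Lemma rank_mxsub m n m' n' (f : 'I_m' -> 'I_m) (g : 'I_n' -> 'I_n)
  (F : fieldType) (A : 'M[F]_(m, n)) : (\rank (mxsub f g A) <= \rank A)%N.
Proof.
rewrite mxsubrc; apply: leq_trans (mxrankS (rowsub_sub _ _)) _.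
rewrite -mxrank_tr -[X in (_ <= X)%N]mxrank_tr.
have -> : (colsub g A)^T = rowsub g A^T by apply/matrixP => i j; rewrite !mxE.
exact: mxrankS (rowsub_sub _ _).
Qed.

Lemma minor_rankE m (M : 'M[R]_m) : minor_rank R m M = \rank (map_mx tf M).
Proof.
apply/eqP; rewrite eqn_leq; apply/andP; split.
- apply/bigmax_leqP => k /existsP[f /existsP[g /and3P[fi gi d0]]].
  have -> : (k : nat) = \rank (mxsub f g (map_mx tf M)).
    rewrite mxrank_unit // unitmxE unitfE -map_mxsub det_map_mx tofrac_eq0.
    exact d0.
  exact: rank_mxsub.
- set A := map_mx tf M.
  set f1 := maxrankfun A.
  set B := rowsub f1 A.
  have fB : row_full B^T.
    by rewrite /row_full mxrank_tr; move: (maxrowsub_free A); rewrite /row_free.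
  set f2 := fullrankfun fB.
  have hC : rowsub f2 B^T = (mxsub f1 f2 A)^T by apply/matrixP => i j; rewrite !mxE.
  have hu := fullrowsub_unit fB; rewrite -/f2 hC unitmx_tr unitmxE unitfE in hu.
  have ltr : (\rank A < m.+1)%N by rewrite ltnS rank_leq_row.
  apply: (@leq_bigmax_cond _ _ _ (Ordinal ltr)).
  apply/existsP; exists f1; apply/existsP; exists f2.
  rewrite /A -map_mxsub det_map_mx tofrac_eq0 in hu.
  apply/and3P; split.
  + by apply/injectiveP; apply: maxrankfun_inj.
  + by apply/injectiveP; apply: fullrankfun_inj.
  + exact hu.
Qed.

Lemma sigma_le (T T' : bmat R) m m' (X : 'I_m -> {set bG T}) (Y : 'I_m' -> {set bG T'})
  (P : 'M[R]_(m', m)) :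
  filling_matrix R T' m' Y = P *m filling_matrix R T m X *m P^T ->
  (filling_sigma R T' m' Y <= filling_sigma R T m X)%N.
Proof.
move=> hY; rewrite /filling_sigma !minor_rankE hY !map_mxM.
apply: half_leq; apply: leq_trans (mxrankM_maxl _ _) _.
exact: mxrankM_maxr.
Qed.

Definition le_gen (T T' : bmat R) := forall m (X : 'I_m -> {set bG T}),
  is_filling R T m X -> exists m' (Y : 'I_m' -> {set bG T'}),
    is_filling R T' m' Y /\ (filling_sigma R T' m' Y <= filling_sigma R T m X)%N.

Lemma genus_iff (T T' : bmat R) : le_gen T T' -> le_gen T' T ->
  forall k, is_genus T k <-> is_genus T' k.
Proof.
have H : forall T T' : bmat R, le_gen T T' -> le_gen T' T ->
  forall k, is_genus T k -> is_genus T' k.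
  move=> T1 T2 h12 h21 k [[m [X [hX <-]]] hmin]; split.
  - have [m' [Y [hY le]]] := h12 _ _ hX.
    exists m', Y; split => //; apply/eqP; rewrite eqn_leq le /=.
    have [m2 [Z [hZ le2]]] := h21 _ _ hY.
    exact: leq_trans (hmin _ _ hZ) le2.
  - move=> m' Y hY; have [m2 [Z [hZ le2]]] := h21 _ _ hY.
    exact: leq_trans (hmin _ _ hZ) le2.
move=> h1 h2 k; split; [exact: H | exact: H].
Qed.
End Rank.

Set Implicit Arguments. Unset Strict Implicit.

Lemma alt_sum (R : comRingType) (I : finType) (F : I -> I -> R) :
  (forall i j, F i j = - F j i) -> (forall i, F i i = 0) ->
  \sum_i \sum_j F i j = 0.
Proof.
move=> Fs F0; rewrite pair_big /=.
pose lt (p : I * I) := (enum_rank p.1 < enum_rank p.2)%N.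
rewrite (bigID lt) /= [\sum_(p | ~~ lt p) _](bigID (fun p : I * I => p.1 == p.2)) /=.
rewrite [X in _ + (X + _)]big1; last by move=> [i j] /= /andP[_ /eqP ->]; rewrite F0.
pose sw (p : I * I) := (p.2, p.1).
have swK : involutive sw by case.
rewrite add0r (reindex_inj (inv_inj swK)) /=.
rewrite (eq_bigl (fun p : I * I => ~~ lt p && (p.1 != p.2))); last first.
  move=> [i j]; rewrite /lt /sw /=.
  case: (ltngtP (enum_rank i) (enum_rank j)) => //= h.
  - apply/esym/negP => /eqP ji; move: h; by rewrite ji ltnn.
  - by rewrite (enum_rank_inj (val_inj h)) eqxx.
rewrite -big_split /=; apply: big1 => [[i j]] _ /=.
by rewrite (Fs j i) addNr.
Qed.

Section Form.
Variable R : idomainType.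
Variable U : bmat R.
Local Notation G := (bG U).
Definition bf (u v : G -> R) : R := \sum_y \sum_z u y * v z * bb U y z.

Lemma bf_ind (X Y : {set G}) :
  bset R U X Y = bf (fun y => (y \in X)%:R) (fun z => (z \in Y)%:R).
Proof.
rewrite /bset /bf big_mkcond /=; apply: eq_bigr => y _.
case: (y \in X).
- rewrite big_mkcond; apply: eq_bigr => z _.
  by case: (z \in Y); rewrite ?mul1r ?mul0r.
- by rewrite big1 // => z _; rewrite !mul0r.
Qed.

Lemma bf_ext u u' v v' : (forall y, u y = u' y) -> (forall z, v z = v' z) ->
  bf u v = bf u' v'.
Proof.
move=> hu hv; apply: eq_bigr => y _; apply: eq_bigr => z _; by rewrite hu hv.
Qed.

Lemma bf_skew u v : bf u v = - bf v u.
Proof.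
rewrite /bf exchange_big -sumrN; apply: eq_bigr => y _; rewrite -sumrN.
apply: eq_bigr => z _; rewrite (bb_skew _ U z y) mulrN; congr (- _).
by rewrite [u z * _]mulrC.
Qed.

Lemma bf_alt v : bf v v = 0.
Proof.
apply: alt_sum => [i j|i]; last by rewrite (bb_diag _ U) mulr0.
by rewrite (bb_skew _ U i j) mulrN [v i * _]mulrC.
Qed.

Lemma bf_suml (I : finType) (k : I -> R) (w : I -> G -> R) u :
  (forall y, u y = \sum_i k i * w i y) -> forall v, bf u v = \sum_i k i * bf (w i) v.
Proof.
move=> hu v; rewrite /bf.
transitivity (\sum_y \sum_z \sum_i k i * (w i y * v z * bb U y z)).
  apply: eq_bigr => y _; apply: eq_bigr => z _; rewrite hu !mulr_suml.
  by apply: eq_bigr => i _; rewrite !mulrA.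
rewrite exchange_big /=; under eq_bigr do rewrite exchange_big /=.
rewrite exchange_big /=; apply: eq_bigr => i _.
rewrite big_distrr /= exchange_big /=; apply: eq_bigr => y _; by rewrite big_distrr.
Qed.

Lemma bf_sumr (I : finType) (k : I -> R) (w : I -> G -> R) v :
  (forall y, v y = \sum_i k i * w i y) -> forall u, bf u v = \sum_i k i * bf u (w i).
Proof.
move=> hv u; rewrite bf_skew (bf_suml hv) -sumrN; apply: eq_bigr => i _.
by rewrite bf_skew mulrN opprK.
Qed.

Lemma bf_lin2l w a b d v : (forall y, w y = a y + d * b y) ->
  bf w v = bf a v + d * bf b v.
Proof.
move=> hw; rewrite /bf big_distrr -big_split /=; apply: eq_bigr => y _.
rewrite big_distrr -big_split /=; apply: eq_bigr => z _.
by rewrite hw !mulrA mulrDl mulrDl.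
Qed.

Lemma bf_lin2r w a b d v : (forall y, w y = a y + d * b y) ->
  bf v w = bf v a + d * bf v b.
Proof.
move=> hw; rewrite bf_skew (bf_lin2l _ hw) (bf_skew a) (bf_skew b).
by rewrite mulrN opprD !opprK.
Qed.

Section Rad.
Variable old : pred G.
Variable u : G -> R.
Hypothesis hu : forall y, old y -> \sum_z bb U y z * u z = 0.

Lemma bf_oldu v : (forall y, ~~ old y -> v y = 0) -> bf v u = 0.
Proof.
move=> hv; rewrite /bf; apply: big1 => y _.
case: (boolP (old y)) => oy.
- transitivity (v y * \sum_z bb U y z * u z); last by rewrite hu // mulr0.
  rewrite big_distrr; apply: eq_bigr => z _.
  by rewrite -mulrA [u z * _]mulrC.
- by rewrite hv // big1 // => z _; rewrite !mul0r.
Qed.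

Lemma bf_rad v1 v2 w1 w2 d1 d2 :
  (forall y, ~~ old y -> v1 y = 0) -> (forall y, ~~ old y -> v2 y = 0) ->
  (forall y, w1 y = v1 y + d1 * u y) -> (forall y, w2 y = v2 y + d2 * u y) ->
  bf w1 w2 = bf v1 v2.
Proof.
move=> h1 h2 e1 e2.
rewrite (bf_lin2l _ e1) (bf_lin2r _ e2) (bf_lin2r _ e2) (bf_oldu h1) bf_alt.
by rewrite (bf_skew u) (bf_oldu h2) !mulr0 !addr0 oppr0 mulr0 addr0.
Qed.
End Rad.

Lemma bf_gram m m' (P : 'M[R]_(m', m)) (v : 'I_m -> G -> R) (w : 'I_m' -> G -> R) :
  (forall a y, w a y = \sum_b P a b * v b y) ->
  forall a c, bf (w a) (w c) = (P *m (\matrix_(b, d) bf (v b) (v d)) *m P^T) a c.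
Proof.
move=> hw a c; rewrite (bf_suml (hw a)) !mxE.
under eq_bigr do rewrite (bf_sumr (hw c)).
under [RHS]eq_bigr do rewrite !mxE big_distrl /=.
rewrite exchange_big /=; apply: eq_bigr => b _.
rewrite big_distrr /=; apply: eq_bigr => d _; rewrite !mxE.
by rewrite -mulrA [bf _ _ * _]mulrC.
Qed.
End Form.


Lemma sum_delta (R : nzRingType) (I : finType) (a : I) (F : I -> R) :
  \sum_b (a == b)%:R * F b = F a.
Proof.
rewrite (bigD1 a) //= eqxx mul1r big1 ?addr0 // => b /negPf.
by rewrite eq_sym => ->; rewrite mul0r.
Qed.

Lemma disjointP (T : finType) (A B : {set T}) :
  reflect (forall x, x \in A -> x \in B -> False) [disjoint A & B].
Proof.
rewrite disjoints_subset; apply: (iffP subsetP) => h x.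
- by move=> xA xB; have := h x xA; rewrite inE xB.
- by move=> xA; rewrite inE; apply/negP => xB; exact: h x xA xB.
Qed.

Section Emb.
Variable R : idomainType.
Variables T U : bmat R.
Variable f : bG T -> bG U.
Hypothesis femb : bmat_emb R T U f.
Let im := f @: [set: bG T].

Lemma finj : injective f. Proof. by case: femb. Qed.

Lemma sum_old (F : bG U -> R) : (forall y, y \notin im -> F y = 0) ->
  \sum_y F y = \sum_x F (f x).
Proof.
move=> h0; rewrite (bigID (mem im)) /= [X in _ + X]big1 ?addr0; last first.
  by move=> y; apply: h0.
rewrite (big_imset _ (in2W finj)) /=.
by apply: eq_bigl => x; rewrite inE.
Qed.

Definition restr (A : {set bG U}) (y : bG U) : R := ((y \in A) && (y \in im))%:R.

Lemma restr_old A y : y \notin im -> restr A y = 0.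
Proof. by rewrite /restr => /negPf ->; rewrite andbF. Qed.

Lemma bset_pre (A B : {set bG U}) :
  bset R T (f @^-1: A) (f @^-1: B) = @bf _ U (restr A) (restr B).
Proof.
rewrite bf_ind /bf sum_old; last first.
  by move=> y hy; rewrite big1 // => z _; rewrite restr_old // !mul0r.
apply: eq_bigr => x _; rewrite sum_old; last first.
  by move=> y hy; rewrite (restr_old B) // mulr0 mul0r.
apply: eq_bigr => x' _.
have [_ _ hb] := femb.
by rewrite /restr hb !inE !imset_f ?inE // !andbT.
Qed.

Lemma preim_img (X : {set bG T}) : f @^-1: (f @: X) = X.
Proof. by apply/setP => x; rewrite inE mem_imset //; exact: finj. Qed.

Lemma restr_img (X : {set bG T}) y : restr (f @: X) y = (y \in f @: X)%:R.
Proof.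
rewrite /restr; case: (boolP (y \in f @: X)) => //= /imsetP[x _ ->].
by rewrite imset_f.
Qed.

Lemma bset_img (X Y : {set bG T}) :
  bset R T X Y = @bf _ U (fun y => (y \in f @: X)%:R) (fun y => (y \in f @: Y)%:R).
Proof.
rewrite -{1}(preim_img X) -{1}(preim_img Y) bset_pre.
by apply: bf_ext => y; rewrite restr_img.
Qed.

Lemma card_pre (A : {set bG U}) : #|f @^-1: A| = #|A :&: im|.
Proof.
rewrite -(card_imset _ finj); apply: eq_card => y; rewrite [in RHS]inE.
apply/imsetP/andP => [[x hx ->]|[hyA /imsetP[x _ e]]].
- by move: hx; rewrite inE => ->; rewrite imset_f ?inE.
- by exists x; rewrite // inE -e.
Qed.

Lemma card_pre_le (A : {set bG U}) : (#|f @^-1: A| <= #|A|)%N.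
Proof. by rewrite card_pre subset_leq_card // subsetIl. Qed.

Lemma card_pre_N (A : {set bG U}) g : g \in A -> g \notin im ->
  (#|f @^-1: A| <= #|A| - 1)%N.
Proof.
move=> gA gim; rewrite card_pre (cardsD1 g A) gA add1n subSS subn0.
apply: subset_leq_card; apply/subsetP => y; rewrite !inE => /andP[yA yim].
rewrite yA andbT; apply/eqP => e; move: gim; by rewrite -e yim.
Qed.

Lemma pre_filling m (Y : 'I_m -> {set bG U}) :
  (forall a b, a != b -> [disjoint Y a & Y b]) ->
  (forall y, y \in im -> exists a, y \in Y a) ->
  (forall a, (#|f @^-1: Y a| <= 2)%N) ->
  (exists a, Y a = [set bs U]) ->
  is_filling R T m (fun a => f @^-1: Y a).
Proof.
move=> hd hc hcard [i0 hi0]; have [_ fs _] := femb; split => //.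
- move=> a b /hd /disjointP h; apply/disjointP => x; rewrite !inE; exact: h.
- apply/setP => x; rewrite inE; apply/bigcupP.
  have [a ha] := hc (f x) (imset_f _ (in_setT x)).
  by exists a => //; rewrite inE.
- exists i0; apply/setP => x; rewrite !inE hi0 inE -fs.
  by rewrite (inj_eq finj).
Qed.

Variable u : bG U -> R.
Hypothesis hu : forall x, \sum_z bb U (f x) z * u z = 0.

Lemma hu_old : forall y, y \in im -> \sum_z bb U y z * u z = 0.
Proof. by move=> y /imsetP[x _ ->]; apply: hu. Qed.

Lemma backward m (Y : 'I_m -> {set bG U}) (Y' : 'I_m -> {set bG U})
  (P : 'M[R]_m) (d : 'I_m -> R) :
  is_filling R U m Y ->
  is_filling R T m (fun a => f @^-1: Y' a) ->
  (forall a y, restr (Y' a) y + d a * u y = \sum_b P a b * (y \in Y b)%:R) ->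
  exists m' (X : 'I_m' -> {set bG T}),
    is_filling R T m' X /\ (filling_sigma R T m' X <= filling_sigma R U m Y)%N.
Proof.
move=> _ hX hP; exists m, (fun a => f @^-1: Y' a); split => //.
apply: (@sigma_le _ _ _ _ _ _ _ P); apply/matrixP => a c.
rewrite [LHS]mxE bset_pre.
rewrite -(bf_rad (old := mem im) hu_old (v1 := restr (Y' a)) (v2 := restr (Y' c))
   (d1 := d a) (d2 := d c)
   (w1 := fun y => \sum_b P a b * (y \in Y b)%:R)
   (w2 := fun y => \sum_b P c b * (y \in Y b)%:R)); first last.
- by move=> y; rewrite hP.
- by move=> y; rewrite hP.
- by move=> y; apply: restr_old.
- by move=> y; apply: restr_old.
rewrite (bf_gram (P := P) (v := fun b y => (y \in Y b)%:R)
   (w := fun a y => \sum_b P a b * (y \in Y b)%:R)) //.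
congr (_ _ a c); congr (_ *m _ *m _); apply/matrixP => b b'.
by rewrite !mxE bf_ind.
Qed.

Section Fwd.
Variable N : {set bG U}.
Hypothesis hN : forall y, (y \in N) = (y \notin im).
Hypothesis hN2 : (#|N| <= 2)%N.
Variable c : R.
Hypothesis hcu : forall y, (y \in N)%:R = c * (y == bs U)%:R + u y.

Lemma forward : le_gen R T U.
Proof.
move=> m X [hd hc hcard [i0 hi0]].
pose Y (j : 'I_m.+1) := if unlift ord_max j is Some a then f @: X a else N.
pose P : 'M[R]_(m.+1, m) := \matrix_(j, b)
  if unlift ord_max j is Some a then (a == b)%:R else c * (b == i0)%:R.
have [_ fs hb] := femb.
have hY : is_filling R U m.+1 Y.
  split.
  - move=> j k; rewrite /Y.
    case: unliftP => [a ->|->]; case: unliftP => [b ->|->] hjk.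
    + have hab : a != b by apply: contra hjk => /eqP ->.
      apply/disjointP => y /imsetP[x1 h1 ->] /imsetP[x2 h2 /finj e].
      subst x2; move/disjointP: (hd a b hab) => /(_ x1 h1); by apply.
    + apply/disjointP => y /imsetP[x _ ->]; rewrite hN imset_f ?inE //.
    + apply/disjointP => y; rewrite hN => hy /imsetP[x _ e]; move: hy.
      by rewrite e imset_f ?inE.
    + by rewrite eqxx in hjk.
  - apply/setP => y; rewrite inE; apply/bigcupP.
    case: (boolP (y \in im)) => [/imsetP[x _ ->]|hy].
    + have : x \in \bigcup_(i < m) X i by rewrite hc inE.
      case/bigcupP => a _ hx; exists (lift ord_max a) => //.
      by rewrite /Y liftK; exact: imset_f.
    + by exists ord_max => //; rewrite /Y unlift_none hN.
  - move=> j; rewrite /Y; case: unliftP => [a _|_] //.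
    exact: leq_trans (leq_imset_card _ _) (hcard a).
  - by exists (lift ord_max i0); rewrite /Y liftK hi0 imset_set1 fs.
exists m.+1, Y; split => //.
apply: (@sigma_le _ _ _ _ _ _ _ P); apply/matrixP => j k.
rewrite [LHS]mxE bf_ind.
pose v b y := (y \in f @: X b)%:R : R.
pose w j y := \sum_b P j b * v b y.
pose dl (j : 'I_m.+1) := (j == ord_max)%:R : R.
have hw : forall j y, (y \in Y j)%:R = w j y + dl j * u y.
  move=> j' y; rewrite /w /Y /dl; case: unliftP => [a ->|->].
  - under eq_bigr do rewrite mxE liftK.
    by rewrite sum_delta eq_sym (negPf (neq_lift _ _)) mul0r addr0.
  - under eq_bigr do rewrite mxE unlift_none -mulrA eq_sym.
    rewrite -big_distrr /= sum_delta eqxx mul1r hcu /v hi0 imset_set1 fs.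
    by rewrite inE.
have wold : forall j y, y \notin im -> w j y = 0.
  move=> j' y hy; rewrite /w big1 // => b _; rewrite /v.
  case: (boolP (y \in f @: X b)) => [/imsetP[x _ e]|]; last by rewrite mulr0.
  by move: hy; rewrite e imset_f ?inE.
rewrite (bf_rad (old := mem im) hu_old (v1 := w j) (v2 := w k) (d1 := dl j) (d2 := dl k)) //; first last.
- by move=> y; apply: wold.
- by move=> y; apply: wold.
rewrite (bf_gram (P := P) (v := v) (w := w)) //.
congr (_ _ j k); congr (_ *m _ *m _); apply/matrixP => b b'.
by rewrite !mxE bset_img.
Qed.

Lemma hu_N y : u y = (y \in N)%:R - c * (y == bs U)%:R.
Proof. by rewrite hcu [c * _ + _]addrC addrK. Qed.

Lemma backward_simple m (Y : 'I_m -> {set bG U}) :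
  is_filling R U m Y ->
  (forall a, N \subset Y a \/ [disjoint N & Y a]) ->
  exists m' (X : 'I_m' -> {set bG T}),
    is_filling R T m' X /\ (filling_sigma R T m' X <= filling_sigma R U m Y)%N.
Proof.
move=> hY hNY; have [hd hc hcard [i0 hi0]] := hY.
pose d a := (N \subset Y a)%:R : R.
pose P : 'M[R]_m := \matrix_(a, b) ((a == b)%:R - c * d a * (b == i0)%:R).
apply: (backward (Y' := Y) (P := P) (d := d)) => //.
- apply: pre_filling => //.
  + move=> y _; have : y \in \bigcup_(a < m) Y a by rewrite hc inE.
    by case/bigcupP => a _ h; exists a.
  + by move=> a; exact: leq_trans (card_pre_le _) (hcard a).
  + by exists i0.
- move=> a y.
  under eq_bigr do rewrite mxE mulrBl.
  rewrite sumrB sum_delta.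
  under eq_bigr do rewrite -!mulrA eq_sym.
  rewrite -!big_distrr /= sum_delta hi0 inE hu_N /d /restr.
  case: (boolP (N \subset Y a)) => hs /=.
  + rewrite !mul1r addrA; congr (_ - _).
    case: (boolP (y \in N)) => yN.
    * rewrite (subsetP hs y yN) /=.
      have : y \notin im by rewrite -hN.
      by move/negPf => ->; rewrite add0r.
    * have -> : y \in im by rewrite -[_ \in im]negbK -hN.
      by rewrite andbT addr0.
  + have hdj : [disjoint N & Y a] by case: (hNY a) => // h; rewrite h in hs.
    rewrite !mul0r mulr0 addr0 subr0.
    case: (boolP (y \in Y a)) => //= ya.
    have : y \in N = false by exact: disjointFl hdj ya.
    by rewrite hN => /negbFE ->.
Qed.


Lemma backward_merge m (Y : 'I_m -> {set bG U}) i j g1 g2 :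
  is_filling R U m Y -> i != j -> N \subset Y i :|: Y j ->
  g1 \in N -> g1 \in Y i -> g2 \in N -> g2 \in Y j ->
  exists m' (X : 'I_m' -> {set bG T}),
    is_filling R T m' X /\ (filling_sigma R T m' X <= filling_sigma R U m Y)%N.
Proof.
move=> hY hij hNij g1N g1i g2N g2j; have [hd hc hcard [i0 hi0]] := hY.
have [_ fs _] := femb.
pose Y' a := if a == i then Y i :|: Y j else if a == j then set0 else Y a.
pose d a := (a == i)%:R : R.
pose P : 'M[R]_m := \matrix_(a, b) (if a == i then
   (b == i)%:R + (b == j)%:R - c * (b == i0)%:R
   else if a == j then 0 else (a == b)%:R).
have hNa : forall a y, a != i -> a != j -> y \in Y a -> y \notin N.
  move=> a y ai aj ya; apply/negP => yN.
  have := subsetP hNij y yN; rewrite inE => /orP[yi|yj].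
  - by move/disjointP: (hd a i ai) => /(_ y ya yi).
  - by move/disjointP: (hd a j aj) => /(_ y ya yj).
have sN : bs U \notin N by rewrite hN negbK -fs imset_f ?inE.
have hi0i : i0 != i.
  apply/eqP => e; move: g1i; rewrite -e hi0 inE => /eqP e1.
  by move: g1N; rewrite e1 (negPf sN).
have hi0j : i0 != j.
  apply/eqP => e; move: g2j; rewrite -e hi0 inE => /eqP e1.
  by move: g2N; rewrite e1 (negPf sN).
have dij : [disjoint Y i & Y j] by exact: hd.
have key : forall a y, y \in Y' a ->
    (a = i /\ (y \in Y i \/ y \in Y j)) \/ [/\ a != i, a != j & y \in Y a].
  move=> a y; rewrite /Y'; case: (eqVneq a i) => [->|ai].
  - by rewrite inE => /orP h; left.
  - case: (eqVneq a j) => [_|aj]; first by rewrite inE.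
    by move=> h; right.
apply: (backward (Y' := Y') (P := P) (d := d)) => //.
- apply: pre_filling.
  + move=> a b hab; apply/disjointP => y /key ha /key hb.
    case: ha hb => [[ai hya]|[ai aj ya]] [[bi hyb]|[bi bj yb]].
    * by rewrite ai bi eqxx in hab.
    * case: hya => hy.
      - by move/disjointP: (hd b i bi) => /(_ y yb hy).
      - by move/disjointP: (hd b j bj) => /(_ y yb hy).
    * case: hyb => hy.
      - by move/disjointP: (hd a i ai) => /(_ y ya hy).
      - by move/disjointP: (hd a j aj) => /(_ y ya hy).
    * by move/disjointP: (hd a b hab) => /(_ y ya yb).
  + move=> y _; have : y \in \bigcup_(a < m) Y a by rewrite hc inE.
    case/bigcupP => a _ h; rewrite /Y'.
    case: (eqVneq a i) => [e|ai]; first by exists i; rewrite eqxx inE -e h.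
    case: (eqVneq a j) => [e|aj]; first by exists i; rewrite eqxx inE -e h orbT.
    by exists a; rewrite (negPf ai) (negPf aj).
  + move=> a; rewrite /Y'; case: (eqVneq a i) => [_|ai].
    * rewrite preimsetU; apply: leq_trans (leq_card_setU _ _).1 _.
      have g1im : g1 \notin im by rewrite -hN.
      have g2im : g2 \notin im by rewrite -hN.
      have e1 := card_pre_N g1i g1im; have e2 := card_pre_N g2j g2im.
      have c1 := hcard i; have c2 := hcard j.
      rewrite -[2%N]/(1 + 1)%N; apply: leq_add.
      - by apply: leq_trans e1 _; rewrite leq_subLR.
      - by apply: leq_trans e2 _; rewrite leq_subLR.
    * case: (eqVneq a j) => [_|aj]; first by rewrite preimset0 cards0.
      exact: leq_trans (card_pre_le _) (hcard a).
  + by exists i0; rewrite /Y' (negPf hi0i) (negPf hi0j).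
- move=> a y; rewrite hu_N /d /restr /Y'.
  case: (eqVneq a i) => [->|ai].
  + under eq_bigr do rewrite mxE eqxx mulrBl mulrDl.
    rewrite sumrB big_split /=.
    under [X in _ = X + _ - _]eq_bigr do rewrite eq_sym.
    under [X in _ = _ + X - _]eq_bigr do rewrite eq_sym.
    rewrite !sum_delta.
    under eq_bigr do rewrite -mulrA eq_sym.
    rewrite -big_distrr /= sum_delta hi0 inE mul1r addrA; congr (_ - _).
    rewrite inE.
    have imN : forall z, (z \in im)%:R + (z \in N)%:R = 1 :> R.
      by move=> z; rewrite hN; case: (z \in im) => /=; rewrite ?addr0 ?add0r.
    case: (boolP (y \in Y i)) => yi; case: (boolP (y \in Y j)) => yj //=.
    * by move/disjointP: dij => /(_ y yi yj).
    * by rewrite imN addr0.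
    * by rewrite imN add0r.
    * have -> : y \in N = false.
        apply/negbTE/negP => /(subsetP hNij); by rewrite inE (negPf yi) (negPf yj).
      by rewrite addr0.
  + rewrite mul0r addr0; case: (eqVneq a j) => [->|aj].
    * have hji : (j == i) = false by rewrite eq_sym (negPf hij).
      rewrite inE /= big1 // => b _; by rewrite mxE hji eqxx mul0r.
    * under eq_bigr do rewrite mxE (negPf ai) (negPf aj).
      rewrite sum_delta; case: (boolP (y \in Y a)) => //= ya.
      have := hNa a y ai aj ya; rewrite hN negbK => -> //.
Qed.

End Fwd.
End Emb.


Section Moves.
Variable R : idomainType.

Lemma sum_delta_r (G : finType) (g : G) (F : G -> R) :
  \sum_z F z * (z == g)%:R = F g.
Proof. by under eq_bigr do rewrite mulrC eq_sym; rewrite sum_delta. Qed.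

Lemma imP (T U : finType) (f : T -> U) y :
  reflect (exists x, y = f x) (y \in f @: [set: T]).
Proof.
apply: (iffP imsetP) => [[x _ ->]|[x ->]]; exists x => //.
Qed.

Lemma N1 (T U : bmat R) (f : bG T -> bG U) g :
  (forall x, f x <> g) -> (forall y, y = g \/ exists x, y = f x) ->
  forall y, (y \in [set g]) = (y \notin f @: [set: bG T]).
Proof.
move=> hfg hall y; rewrite inE.
case: (boolP (y \in f @: [set: bG T])) => [/imP[x ->]|hy] /=.
- by apply/negbTE/eqP; exact: hfg.
- case: (hall y) => [->|[x e]]; first by rewrite eqxx.
  by move: hy; rewrite e; case/negP; apply/imP; exists x.
Qed.

Lemma back1 (T U : bmat R) (f : bG T -> bG U) g m (Y : 'I_m -> {set bG U}) a :
  [set g] \subset Y a \/ [disjoint [set g] & Y a].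
Proof.
case: (boolP (g \in Y a)) => h; [left; by rewrite sub1set | right; by rewrite disjoints1].
Qed.

Lemma ext_both (T U : bmat R) : elem_ext R T U -> le_gen R T U /\ le_gen R U T.
Proof.
case.
-
  move=> [f [g [femb hfg hall hg]]]; have [_ fs hb] := femb.
  pose u (z : bG U) := (z == g)%:R : R.
  have hu : forall x, \sum_z bb U (f x) z * u z = 0.
    by move=> x; rewrite sum_delta_r (bb_skew _ U) hg oppr0.
  have hN := N1 hfg hall.
  have hcu : forall y, (y \in [set g])%:R = 0 * (y == bs U)%:R + u y.
    by move=> y; rewrite mul0r add0r inE.
  split.
  + by apply: (forward femb hu hN _ hcu); rewrite cards1.
  + move=> m Y hY; apply: (backward_simple femb hu hN hcu hY) => a.
    exact: back1 f g m Y a.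
-
  move=> [f [g [femb hfg hall hg]]]; have [_ fs hb] := femb.
  pose u (z : bG U) := (z == g)%:R - (z == bs U)%:R : R.
  have hu : forall x, \sum_z bb U (f x) z * u z = 0.
    move=> x; under eq_bigr do rewrite mulrBr.
    rewrite sumrB !sum_delta_r (bb_skew _ U) hg -fs hb (bb_skew _ T x).
    by rewrite opprK addNr.
  have hN := N1 hfg hall.
  have hcu : forall y, (y \in [set g])%:R = 1 * (y == bs U)%:R + u y.
    by move=> y; rewrite mul1r inE /u addrC subrK.
  split.
  + by apply: (forward femb hu hN _ hcu); rewrite cards1.
  + move=> m Y hY; apply: (backward_simple femb hu hN hcu hY) => a.
    exact: back1 f g m Y a.
-
  move=> [f [g1 [g2 [femb g12 hfg hall hg]]]]; have [_ fs hb] := femb.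
  pose u (z : bG U) := (z == g1)%:R + (z == g2)%:R - (z == bs U)%:R : R.
  have hu : forall x, \sum_z bb U (f x) z * u z = 0.
    move=> x; under eq_bigr do rewrite mulrBr mulrDr.
    rewrite sumrB big_split /= !sum_delta_r (bb_skew _ U _ g1) (bb_skew _ U _ g2).
    rewrite -opprD hg -fs hb (bb_skew _ T x).
    by rewrite opprK addNr.
  have hN : forall y, (y \in [set g1; g2]) = (y \notin f @: [set: bG T]).
    move=> y; rewrite !inE.
    case: (boolP (y \in f @: [set: bG T])) => [/imP[x ->]|hy] /=.
    + by case: (hfg x) => h1 h2; apply/negbTE/orP; case=> /eqP.
    + case: (hall y) => [->|->|[x e]]; rewrite ?eqxx ?orbT //.
      by move: hy; rewrite e; case/negP; apply/imP; exists x.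
  have hcu : forall y, (y \in [set g1; g2])%:R = 1 * (y == bs U)%:R + u y.
    move=> y; rewrite mul1r /u addrC subrK !inE.
    case: (eqVneq y g1) => [->|ne] /=; last by rewrite add0r.
    have -> : (g1 == g2) = false by apply/eqP.
    by rewrite addr0.
  split.
  + have h2 : (#|[set g1; g2]| <= 2)%N by rewrite cards2; case: (g1 != g2).
    exact: (forward femb hu hN h2 hcu).
  + move=> m Y hY; have [hd hc _ _] := hY.
    have : g1 \in \bigcup_(a < m) Y a by rewrite hc inE.
    case/bigcupP => i _ g1i.
    have : g2 \in \bigcup_(a < m) Y a by rewrite hc inE.
    case/bigcupP => j _ g2j.
    case: (eqVneq i j) => [eij|nij].
    * subst j; apply: (backward_simple femb hu hN hcu hY) => a.
      case: (eqVneq a i) => [->|ai].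
      - by left; rewrite subUset !sub1set g1i g2j.
      - right; apply/disjointP => y; rewrite !inE => /orP[] /eqP -> ya.
        + by move/disjointP: (hd a i ai) => /(_ _ ya g1i).
        + by move/disjointP: (hd a i ai) => /(_ _ ya g2j).
    * apply: (backward_merge femb hu hN hcu hY nij (g1 := g1) (g2 := g2)) => //.
      - apply/subsetP => y; rewrite !inE => /orP[] /eqP ->.
        + by rewrite g1i.
        + by rewrite g2j orbT.
      - by rewrite !inE eqxx.
      - by rewrite !inE eqxx orbT.
Qed.

Lemma iso_both (T U : bmat R) : bmat_iso R T U -> le_gen R T U /\ le_gen R U T.
Proof.
move=> [f [fbij fs hb]].
have femb : bmat_emb R T U f by split => //; exact: bij_inj.
pose u (z : bG U) := 0 : R.
have hu : forall x, \sum_z bb U (f x) z * u z = 0.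
  by move=> x; rewrite big1 // => z _; rewrite mulr0.
have hN : forall y, (y \in (set0 : {set bG U})) = (y \notin f @: [set: bG T]).
  move=> y; rewrite inE; case: fbij => g _ gK.
  by rewrite (_ : y \in _) // -[y]gK; apply/imP; exists (g y).
have hcu : forall y, (y \in (set0 : {set bG U}))%:R = 0 * (y == bs U)%:R + u y.
  by move=> y; rewrite inE mul0r addr0.
split.
- by apply: (forward femb hu hN _ hcu); rewrite cards0.
- move=> m Y hY; apply: (backward_simple femb hu hN hcu hY) => a.
  by left; rewrite sub0set.
Qed.
End Moves.

Unset Implicit Arguments.

Theorem lemma7p1 (R : idomainType) (T T' : bmat R) :
  homologous T T' -> forall k : nat, is_genus T k <-> is_genus T' k.
Proof.
elim => {T T'} [T|T T' hi|T T' he|T T' he|T T' _ IH|T1 T2 T3 _ IH1 _ IH2] k.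
- by [].
- by have [h1 h2] := iso_both hi; exact: genus_iff.
- by have [h1 h2] := ext_both he; exact: genus_iff.
- by have [h1 h2] := ext_both he; exact: genus_iff h2 h1 k.
- by split => h; apply/(IH k).
- by split => h; [apply/(IH2 k)/(IH1 k) | apply/(IH1 k)/(IH2 k)].
Qed.
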